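(* Neither $Cond_{CB}$ nor $Lex_{CB}$ is universal: for each $R\in\{Cond,Lex\}$ there exist a stubbornness function $D$ and an epistemic space $\mathbb{S}$ that is identifiable in the limit (by some learner) but is not identifiable in the limit by $R_{CB}$ with stubbornness function $D$.
   Context: An epistemic space is a pair $\mathbb{S}=(S,\mathcal{O})$ where $S$ is a non-empty, at most countable set of worlds and $\mathcal{O}\subseteq\mathcal{P}(S)$ is a set of observables. A data stream is an infinite sequence $\vec O=(O_0,O_1,\ldots)$ with each $O_i\in\mathcal{O}$; $\vec O[n]=(O_0,\ldots,O_{n-1})$. A stream is sound for $s\in S$ if $s\in O_n$ for all $n$, and complete for $s$ if every $O\in\mathcal{O}$ with $s\in O$ occurs in $\vec O$. A learner is any function mapping $\mathbb{S}$ and finite data sequences to subsets of $S$. A world $s$ is identified in the limit by a learner $L$ if for every stream $\vec O$ sound and complete for $s$ there is $k$ with $L(\mathbb{S},\vec O[n])=\{s\}$ for all $n\ge k$; $\mathbb{S}$ is identified by $L$ if every $s\in S$ is; $\mathbb{S}$ is identifiable in the limit if some learner identifies it. A plausibility space is $\mathbb{B}=(S,\mathcal{O},\preceq)$ with $\preceq$ a total preorder on $S$; $\min_\preceq X$ is the set of $\preceq$-minimal elements of $X$. One-step methods, for a proposition $p\subseteq S$, $\bar p=S\setminus p$: - $Cond_1(\mathbb{B},p)=(S\cap p,\mathcal{O},\preceq\cap((S\cap p)\times(S\cap p)))$. - $Lex_1(\mathbb{B},p)=(S,\mathcal{O},\preceq')$ with $t\preceq' w$ iff ($t,w\in p$ and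 $t\preceq w$) or ($t,w\in\bar p$ and $t\preceq w$) or ($t\in p$, $w\notin p$). A stubbornness function is any $D:\mathcal{P}(S)\to\mathbb{N}$. For a one-step method $R_1$, $R_{CB}(\mathbb{B},\lambda)=\mathbb{B}$ and $R_{CB}(\mathbb{B},\sigma\cdot p)=R_1(R_{CB}(\mathbb{B},\sigma),p)$ if $\#p(\sigma)\ge D(\bar p)$, otherwise $R_{CB}(\mathbb{B},\sigma\cdot p)=R_{CB}(\mathbb{B},\sigma)$, where $\#p(\sigma)$ is the number of occurrences of $p$ in $\sigma$. $Cond_{CB}$, $Lex_{CB}$ arise from $R_1=Cond_1,Lex_1$. The learner $L^\preceq_{R_{CB}}$ maps $\sigma$ to $\min_{\preceq'}S'$ where $R_{CB}((S,\mathcal{O},\preceq),\sigma)=(S',\mathcal{O},\preceq')$. $\mathbb{S}$ is identifiable by $R_{CB}$ if some total preorder $\preceq$ makes $L^\preceq_{R_{CB}}$ identify $\mathbb{S}$ in the limit. A method is universal if it identifies every epistemic space that is identifiable in the limit. *)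

(* Defs.v *)
(* Worlds are natural numbers (every at most countable set of
   worlds is, up to renaming, a subset of nat); sets are predicates. *)
From Stdlib Require Import List Arith ClassicalEpsilon.
Import ListNotations.

Definition set := nat -> Prop.
Definition rel := nat -> nat -> Prop.

Record epistemic_space := ES {
  worlds : set;
  observables : set -> Prop
}.

Definition wf_space (E : epistemic_space) : Prop :=
  (exists s, worlds E s) /\
  (forall o, observables E o -> forall x, o x -> worlds E x).

Definition stream := nat -> set.

Definition is_data_stream (E : epistemic_space) (str : stream) : Prop :=
  forall n, observables E (str n).

(* O[n] = (O_0, ..., O_{n-1}) *)
Definition prefix (str : stream) (n : nat) : list set := map str (seq 0 n).

Definition sound_for (str : stream) (s : nat) : Prop := forall n, str n s.

Definition complete_for (E : epistemic_space) (str : stream) (s : nat) : Prop :=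
  forall o, observables E o -> o s -> exists n, str n = o.

Definition learner := list set -> set.

Definition is_singleton (X : set) (s : nat) : Prop := forall x, X x <-> x = s.

Definition identifies_world (E : epistemic_space) (L : learner) (s : nat) : Prop :=
  forall str : stream, is_data_stream E str -> sound_for str s -> complete_for E str s ->
    exists k, forall n, k <= n -> is_singleton (L (prefix str n)) s.

Definition identifies (E : epistemic_space) (L : learner) : Prop :=
  forall s, worlds E s -> identifies_world E L s.

Definition identifiable (E : epistemic_space) : Prop :=
  exists L : learner, identifies E L.

Definition total_preorder_on (S : set) (le : rel) : Prop :=
  (forall x, S x -> le x x) /\
  (forall x y z, S x -> S y -> S z -> le x y -> le y z -> le x z) /\
  (forall x y, S x -> S y -> le x y \/ le y x).

(* Plausibility state (current worlds, current preorder); observables are unchanged. *)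
Definition pstate := (set * rel)%type.

Definition Cond1 (st : pstate) (p : set) : pstate :=
  (fun x => fst st x /\ p x, snd st).

Definition Lex1 (st : pstate) (p : set) : pstate :=
  (fst st, fun t w =>
     (p t /\ p w /\ snd st t w) \/ (~ p t /\ ~ p w /\ snd st t w) \/ (p t /\ ~ p w)).

Inductive method := Cond | Lex.

Definition one_step (R : method) : pstate -> set -> pstate :=
  match R with Cond => Cond1 | Lex => Lex1 end.

Definition compl (S p : set) : set := fun x => S x /\ ~ p x.

Definition occ (p : set) (sigma : list set) : nat :=
  length (filter (fun q => if excluded_middle_informative (q = p) then true else false) sigma).

Definition stubbornness := set -> nat.

(* R_CB: processes the sequence left to right; hist = already processed prefix *)
Fixpoint rcb_go (R : method) (D : stubbornness) (S : set)
    (hist : list set) (st : pstate) (rest : list set) : pstate :=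
  match rest with
  | [] => st
  | p :: r =>
      rcb_go R D S (hist ++ [p])
        (if D (compl S p) <=? occ p hist then one_step R st p else st) r
  end.

Definition RCB (R : method) (D : stubbornness) (S : set) (le : rel) (sigma : list set) : pstate :=
  rcb_go R D S [] (S, le) sigma.

Definition min_set (le : rel) (X : set) : set :=
  fun x => X x /\ forall y, X y -> le y x -> le x y.

Definition RCB_learner (R : method) (D : stubbornness) (E : epistemic_space) (le : rel) : learner :=
  fun sigma => let st := RCB R D (worlds E) le sigma in min_set (snd st) (fst st).

Definition identifiable_by (R : method) (D : stubbornness) (E : epistemic_space) : Prop :=
  exists le : rel, total_preorder_on (worlds E) le /\ identifies E (RCB_learner R D E le).

(* Main.v *)
Require Import Defs.
From Stdlib Require Import List Arith Lia ClassicalEpsilon Classical.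
Import ListNotations.

Definition Sw : set := fun x => x = 0 \/ x = 1.
Definition S0 : set := fun x => x = 0.
Definition E0 : epistemic_space := ES Sw (fun o => o = Sw \/ o = S0).
Definition D1 : stubbornness := fun _ => 1.

Definition equiv (le : rel) (st : pstate) : Prop :=
  (forall x, fst st x <-> Sw x) /\
  (forall x y, Sw x -> Sw y -> (snd st x y <-> le x y)).

Lemma step_equiv R le st : equiv le st -> equiv le (one_step R st Sw).
Proof.
  intros [H1 H2]; destruct R; simpl; unfold Cond1, Lex1; split; simpl.
  - intro x; rewrite H1; tauto.
  - exact H2.
  - exact H1.
  - intros x y Hx Hy; rewrite <- (H2 x y Hx Hy); tauto.
Qed.

Lemma go_equiv R D le rest : forall hist st, equiv le st ->
  (forall q, In q rest -> q = Sw) -> equiv le (rcb_go R D Sw hist st rest).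
Proof.
  induction rest as [|p r IH]; intros hist st Hst Hr; simpl; auto.
  apply IH.
  - destruct (D (compl Sw p) <=? occ p hist).
    + rewrite (Hr p (or_introl eq_refl)). apply step_equiv; auto.
    + auto.
  - intros q Hq; apply Hr; right; auto.
Qed.

Lemma min_equiv le st x : equiv le st ->
  (min_set (snd st) (fst st) x <-> min_set le Sw x).
Proof.
  intros [H1 H2]; unfold min_set; split; intros [Hx Hm].
  - assert (Hx' : Sw x) by (apply H1; auto). split; auto.
    intros y Hy Hyx. apply (H2 x y Hx' Hy). apply Hm. apply H1; auto.
    apply (H2 y x Hy Hx'); auto.
  - assert (Hx' : fst st x) by (apply H1; auto). split; auto.
    intros y Hy Hyx. assert (Hy' : Sw y) by (apply H1; auto).
    apply (H2 x y Hx Hy'). apply Hm; auto. apply (H2 y x Hy' Hx); auto.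
Qed.

Definition str1 : stream := fun _ => Sw.
Definition str0 : stream := fun n => match n with 0 => S0 | _ => Sw end.

Lemma Sw_neq_S0 : Sw <> S0.
Proof. intro H. assert (S0 1) by (rewrite <- H; right; auto). unfold S0 in *; lia. Qed.

Lemma notidb R : ~ identifiable_by R D1 E0.
Proof.
  intros [le [_ Hid]].
  destruct (Hid 1 (or_intror eq_refl) str1) as [k1 Hk1].
  - intro n; left; reflexivity.
  - intro n; right; reflexivity.
  - intros o [Ho|Ho] H; subst. exists 0; reflexivity. unfold S0 in H; discriminate.
  - destruct (Hid 0 (or_introl eq_refl) str0) as [k0 Hk0].
    + intros [|n]; simpl; auto.
    + intros [|n]; simpl; unfold S0, Sw; auto.
    + intros o [Ho|Ho] H; subst. exists 1; reflexivity. exists 0; reflexivity.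
    + set (n := S (k0 + k1)).
      specialize (Hk1 n ltac:(unfold n; lia)). specialize (Hk0 n ltac:(unfold n; lia)).
      unfold RCB_learner, RCB in *.
      assert (E1 : equiv le (rcb_go R D1 (worlds E0) [] (worlds E0, le) (prefix str1 n))).
      { apply go_equiv. split; simpl; tauto.
        intros q Hq. unfold prefix in Hq. apply in_map_iff in Hq.
        destruct Hq as [m [Hm _]]; subst; reflexivity. }
      assert (E2 : equiv le (rcb_go R D1 (worlds E0) [] (worlds E0, le) (prefix str0 n))).
      { unfold n, prefix. simpl. unfold D1 at 1.
        replace (occ S0 []) with 0 by reflexivity. simpl.
        apply go_equiv. split; simpl; tauto.
        intros q Hq. apply in_map_iff in Hq.
        destruct Hq as [m [Hm Hin]]; subst. apply in_seq in Hin.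
        destruct m; [lia | reflexivity]. }
      assert (A : min_set le Sw 0).
      { apply (min_equiv _ _ _ E2). apply Hk0. reflexivity. }
      apply (min_equiv _ _ _ E1) in A. apply Hk1 in A. discriminate.
Qed.

Definition L0 : learner := fun sigma x =>
  (In S0 sigma /\ x = 0) \/ (~ In S0 sigma /\ x = 1).

Lemma ident : identifies E0 L0.
Proof.
  intros s Hs str Hd Hso Hco.
  destruct Hs as [Hs|Hs]; subst.
  - destruct (Hco S0 (or_intror eq_refl) eq_refl) as [m Hm].
    exists (S m). intros n Hn x. unfold L0.
    assert (In S0 (prefix str n)).
    { unfold prefix. apply in_map_iff. exists m; split; auto. apply in_seq; lia. }
    split; [intros [[_ H']|[H' _]]; tauto | intro; left; auto].
  - exists 0. intros n _ x. unfold L0.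
    assert (~ In S0 (prefix str n)).
    { unfold prefix. intro H. apply in_map_iff in H. destruct H as [m [Hm _]].
      specialize (Hso m). rewrite Hm in Hso. unfold S0 in Hso; discriminate. }
    split; [intros [[H' _]|[_ H']]; tauto | intro; right; auto].
Qed.

Theorem mainTheorem2 :
  forall R : method, exists (E : epistemic_space) (D : stubbornness),
    wf_space E /\ identifiable E /\ ~ identifiable_by R D E.
Proof.
  intro R. exists E0, D1. split; [|split].
  - split. exists 0; left; auto.
    intros o [Ho|Ho] x Hx; subst; simpl; auto. left; auto.
  - exists L0; apply ident.
  - apply notidb.
Qed.
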